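(* Let $m \equiv 1 \pmod 4$ with $m \ge 5$, $n = 3^m - 1$, $v = (3^{(m+1)/2}-1)/2$ and $\delta = (3^{(m-1)/2}+5)/2$. Then $\gcd(v,n) = 1$, and, setting $T_{(0,3,m)}(v) = \{ vi \bmod n : i \in T_{(0,3,m)}\}$, we have $\{1, 2, \ldots, \delta-1\} \subseteq T_{(0,3,m)}(v)$.
   Context: For an integer $0 \le j \le n-1$ with $3$-adic expansion $j = \sum_{t=0}^{m-1} j_t 3^t$, $j_t \in \{0,1,2\}$, let $w_3(j) = \sum_{t=0}^{m-1} j_t$. For distinct $i_1,i_2 \in \{0,1,2,3\}$, $T_{(i_1,i_2,m)} = \{1 \le j \le n-1 : w_3(j) \equiv i_1 \text{ or } i_2 \pmod 4\}$. For an integer $b$, $b \bmod n$ is the unique $b_0 \in \{0,\ldots,n-1\}$ with $b \equiv b_0 \pmod n$. *)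

(* Defs.v *)
From mathcomp Require Import all_boot.
Set Implicit Arguments. Unset Strict Implicit. Unset Printing Implicit Defensive.

Fixpoint w3_aux (fuel j : nat) : nat :=
  match fuel with
  | 0 => 0
  | fuel'.+1 => if j == 0 then 0 else j %% 3 + w3_aux fuel' (j %/ 3)
  end.
Definition w3 (j : nat) : nat := w3_aux j.+1 j.

(* membership in T_(i1,i2,m) = {1 <= j <= n-1 : w3 j = i1 or i2 (mod 4)}, n = 3^m - 1 *)
Definition inT (i1 i2 m j : nat) : bool :=
  [&& 1 <= j, j <= 3 ^ m - 2 & (w3 j %% 4 == i1) || (w3 j %% 4 == i2)].

(* Main.v *)
Require Import Defs.
From mathcomp Require Import all_boot.
From mathcomp Require Import zify.

Lemma w3_aux_eq fuel fuel' j : j < fuel -> j < fuel' -> w3_aux fuel j = w3_aux fuel' j.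
Proof.
elim: fuel fuel' j => [|f IH] [|f'] j //= hj hj'.
have [_|j0] := eqVneq j 0 => //=.
have hq : j %/ 3 < j by rewrite ltn_Pdiv // lt0n.
rewrite (IH f') //; lia.
Qed.

Lemma w3_auxE fuel j : j < fuel -> w3_aux fuel j = w3 j.
Proof. by move=> h; rewrite /w3 (@w3_aux_eq _ j.+1 _ h). Qed.

Lemma w3E j : w3 j = if j == 0 then 0 else j %% 3 + w3 (j %/ 3).
Proof.
rewrite {1}/w3 /=; have [_|j0] := eqVneq j 0 => //.
rewrite w3_auxE //.
have : j %/ 3 < j by rewrite ltn_Pdiv // lt0n.
lia.
Qed.

Lemma w3_step r q : r < 3 -> w3 (r + 3 * q) = r + w3 q.
Proof.
move=> hr.
rewrite w3E.
case: (r + 3 * q =P 0) => [h|/eqP h].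
  have -> : r = 0 by lia.
  have -> : q = 0 by lia.
  by [].
have -> : (r + 3 * q) %% 3 = r by rewrite mulnC addnC modnMDl modn_small.
have -> : (r + 3 * q) %/ 3 = q by rewrite mulnC addnC divnMDl // divn_small ?addn0.
by [].
Qed.

Lemma w3_0 : w3 0 = 0. Proof. by []. Qed.

Lemma w3_cat j a b : a < 3 ^ j -> w3 (a + 3 ^ j * b) = w3 a + w3 b.
Proof.
elim: j a => [|j IH] a ha.
  have -> : a = 0 by rewrite expn0 in ha; lia.
  by rewrite add0n mul1n w3_0.
have -> : a + 3 ^ j.+1 * b = a %% 3 + 3 * (a %/ 3 + 3 ^ j * b).
  rewrite expnS {1}(divn_eq a 3); lia.
rewrite w3_step ?ltn_pmod // IH.
  have wa : w3 a = a %% 3 + w3 (a %/ 3).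
    by rewrite {1}(divn_eq a 3) mulnC addnC w3_step ?ltn_pmod.
  by rewrite wa addnA.
by rewrite ltn_divLR // mulnC -expnS.
Qed.

Lemma w3_odd j : odd (w3 j) = odd j.
Proof.
elim: j {-2}j (leqnn j) => [|N IH] j hj.
  by have -> : j = 0 by lia.
rewrite w3E; have [->|j0] := eqVneq j 0 => //.
rewrite oddD IH; last first.
  have : j %/ 3 < j by rewrite ltn_Pdiv // lt0n.
  lia.
rewrite {3}(divn_eq j 3) oddD oddM /=.
by rewrite andbT addbC.
Qed.

Lemma w3_pow j : w3 (3 ^ j) = 1.
Proof.
by have := @w3_cat j 0 1 (expn_gt0 3 j); rewrite add0n muln1 => ->.
Qed.

Lemma A0 e : (6 * e + 1) * (24 * e ^ 2 + 24 * e + 5) = (48 * e ^ 2 + 24 * e + 2) * (3 * e + 2) + 1.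
Proof. nia. Qed.
Lemma A1 e j : (6 * e + 1) * (2 * j + 3 * (4 * e + 1) * (2 * j)) = 2 * j + (48 * e ^ 2 + 24 * e + 2) * (3 * j).
Proof. nia. Qed.
Lemma A2 e : (6 * e + 1) * (1 + (4 * e + 1) * 2) = 2 * e + 1 + (48 * e ^ 2 + 24 * e + 2) * 1.
Proof. nia. Qed.
Lemma A3 e j : (6 * e + 1) * (2 * j + 1 + 2 * e + (4 * e + 1) + 3 * (4 * e + 1) * (2 * j + 1 + 2 * e)) = 2 * j + 1 + (48 * e ^ 2 + 24 * e + 2) * (3 * j + 3 * e + 2).
Proof. nia. Qed.
Lemma B1 e k : 2 <= e -> k <= 2 * e + 2 -> k + 3 * (4 * e + 1) * k <= 3 * (4 * e + 1) * (4 * e + 1) - 2.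
Proof. nia. Qed.
Lemma B2 e : 2 <= e -> 1 + (4 * e + 1) * 2 <= 3 * (4 * e + 1) * (4 * e + 1) - 2.
Proof. nia. Qed.
Lemma B3 e b : 2 <= e -> b < 4 * e + 1 -> b + (4 * e + 1) + 3 * (4 * e + 1) * b <= 3 * (4 * e + 1) * (4 * e + 1) - 2.
Proof. nia. Qed.
Lemma B4 e k : 2 <= e -> k <= 2 * e + 2 -> k < 48 * e ^ 2 + 24 * e + 2.
Proof. nia. Qed.

Theorem lemma1 (m : nat) :
  m %% 4 = 1 -> 5 <= m ->
  let n := 3 ^ m - 1 in
  let v := (3 ^ ((m + 1) %/ 2) - 1) %/ 2 in
  let delta := (3 ^ ((m - 1) %/ 2) + 5) %/ 2 in
  gcdn v n = 1 /\
  (forall k, 1 <= k <= delta - 1 ->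
     exists2 i, inT 0 3 m i & (v * i) %% n = k).
Proof.
move=> hm m5 n v delta.
set t := m %/ 4.
have mt : m = 4 * t + 1 by rewrite /t {1}(divn_eq m 4) hm; lia.
have h1 : (m - 1) %/ 2 = 2 * t by rewrite mt; lia.
have h2 : (m + 1) %/ 2 = (2 * t).+1 by rewrite mt; lia.
set h := 2 * t.
have t1 : 1 <= t by lia.
have Hm4 : 3 ^ h %% 4 = 1.
  by rewrite /h expnM -modnXm /= exp1n.
have H9 : 9 <= 3 ^ h.
  rewrite /h expnM; apply: (leq_trans _ (leq_pexp2l _ t1)) => //.
set H := 3 ^ h in Hm4 H9.
set e := H %/ 4.
have He : H = 4 * e + 1 by rewrite /e {1}(divn_eq H 4) Hm4; lia.
have e2 : 2 <= e by lia.
have Em : 3 ^ m = 3 * H * H.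
  by rewrite mt /H /h -expnS -expnD; congr (3 ^ _); lia.
have En : n = 48 * e ^ 2 + 24 * e + 2 by rewrite /n Em He; lia.
have Ev : v = 6 * e + 1 by rewrite /v h2 expnS -/h -/H He; lia.
have Ed : delta = 2 * e + 3 by rewrite /delta h1 -/h -/H He; lia.
have E3h1 : 3 ^ h.+1 = 3 * H by rewrite expnS.
split.
  apply/eqP; rewrite -dvdn1.
  have hx : v * (24 * e ^ 2 + 24 * e + 5) = n * (3 * e + 2) + 1.
    by rewrite Ev En A0.
  have d1 : gcdn v n %| n * (3 * e + 2) by apply: dvdn_mulr; exact: dvdn_gcdr.
  rewrite -(dvdn_addr 1 d1) -hx.
  by apply: dvdn_mulr; exact: dvdn_gcdl.
move=> k; rewrite Ed => /andP [k1 k2].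
have kn : k < n by rewrite En; apply: B4; lia.
have modE : forall q, (k + n * q) %% n = k.
  by move=> q; rewrite addnC mulnC modnMDl modn_small.
have kH : k < H by lia.
have inTE : forall i, 1 <= i <= 3 * H * H - 2 ->
    (w3 i %% 4 == 0) || (w3 i %% 4 == 3) -> inT 0 3 m i.
  by move=> i /andP [a b] c; rewrite /inT Em a b c.
case: (boolP (odd k)) => ko; last first.
  have [j kj] : exists j, k = 2 * j.
    by exists k./2; rewrite -[k in LHS]odd_double_half (negbTE ko) add0n; lia.
  exists (k + 3 ^ h.+1 * k).
    apply: inTE.
      rewrite E3h1 He; apply/andP; split; first lia.
      apply: B1; lia.
    rewrite w3_cat; last by rewrite E3h1; lia.
    have : w3 k %% 2 = 0 by rewrite modn2 w3_odd (negbTE ko).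
    move: (w3 k) => w hw; apply/orP; left; apply/eqP; lia.
  rewrite -[X in _ = X](modE (3 * j)) E3h1 He Ev En kj; congr (_ %% _); exact: A1.
case: (k =P 2 * e + 1) => [kw|/eqP kw].
  exists (1 + 3 ^ h * 2).
    apply: inTE.
      rewrite -/H He; apply/andP; split; first lia.
      exact: B2.
    by rewrite w3_cat -/H //; lia.
  rewrite -[X in _ = X](modE 1) -/H He Ev En kw; congr (_ %% _); exact: A2.
have [j kj] : exists j, k = 2 * j + 1.
  by exists k./2; rewrite -[k in LHS]odd_double_half ko; lia.
have kle : k <= 2 * e - 1 by lia.
set b := k + 2 * e.
have bH : b < H by lia.
exists ((b + H) + 3 ^ h.+1 * b).
  apply: inTE.
    rewrite E3h1 He; apply/andP; split; first lia.
    apply: B3; lia.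
  rewrite w3_cat; last by rewrite E3h1; lia.
  have wbH : w3 (b + H) = w3 b + 1 by have := @w3_cat h b 1 bH; rewrite muln1 -/H => ->.
  rewrite wbH.
  have : odd (w3 b) by rewrite w3_odd /b kj oddD oddM /= oddD oddM.
  rewrite -/H; move: (w3 b) => w ow.
  have : w %% 2 = 1 by rewrite modn2 ow.
  move=> hw; apply/orP; right; apply/eqP; lia.
rewrite -[X in _ = X](modE (3 * j + 3 * e + 2)) E3h1 /b He Ev En kj; congr (_ %% _); exact: A3.
Qed.
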